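(* Let $k$, $\Lambda_{\mathbf q}$, $G$, $\chi_{g,l}$, $\mathbb K$, $\Delta_{\mathbb K}$ and the cochains $(x^\alpha\otimes g)\epsilon_\beta^*$ be as in the context, and let the cup product of cochains $f,g'\in\operatorname{Hom}_{\Lambda_{\mathbf q}^e}(\mathbb K,\Lambda_{\mathbf q}\rtimes G)$ be $f\smile g'=\mu\circ(f\otimes_{\Lambda_{\mathbf q}}g')\circ\Delta_{\mathbb K}$, where $\mu$ is multiplication in $\Lambda_{\mathbf q}\rtimes G$. If $\alpha,\gamma\in\{0,1\}^n$, $\beta,\kappa\in\mathbb N^n$ and $g,h\in G$, then $$(x^\alpha\otimes g)\epsilon_\beta^*\smile(x^\gamma\otimes h)\epsilon_\kappa^*=\prod_{l=1}^n\Big(\chi_{g,l}^{\gamma_l}\prod_{k<l}q_{k,l}^{\kappa_k\beta_l-\gamma_k\alpha_l}(-1)^{-\gamma_k\alpha_l}\Big)(x^{\alpha+\gamma}\otimes gh)\epsilon_{\beta+\kappa}^*.$$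
   Context: $k$ is a field of characteristic $0$. Fix $n\ge1$, $q_{i,j}\in k^*$ with $q_{j,i}=q_{i,j}^{-1}$, $q_{i,i}=-1$, and $\Lambda_{\mathbf q}=k\langle x_1,\dots,x_n\mid x_ix_j=-q_{i,j}x_jx_i,\ x_i^2=0\rangle$. For $\alpha\in\mathbb N^n$, $x^\alpha=x_1^{\alpha_1}\cdots x_n^{\alpha_n}$ (which is $0$ if some $\alpha_i\ge2$). $G$ is a finite group acting by algebra automorphisms with ${}^gx_i=\chi_{g,i}x_i$. $\Lambda_{\mathbf q}\rtimes G=\Lambda_{\mathbf q}\otimes kG$ with $(\lambda\otimes g)(\lambda'\otimes h)=\lambda({}^g\lambda')\otimes gh$, a $\Lambda_{\mathbf q}$-bimodule via $\lambda\mapsto\lambda\otimes1$. For $\beta\in\mathbb N^n$, $|\beta|=\sum\beta_i$, $[j]$ is the $j$-th unit vector. $\mathbb K$ is the projective $\Lambda_{\mathbf q}^e$-resolution of $\Lambda_{\mathbf q}$ with $\mathbb K_m=\bigoplus_{|\beta|=m}\Lambda_{\mathbf q}\epsilon_\beta\Lambda_{\mathbf q}$ (free on $\epsilon_\beta$), differential $\delta(\epsilon_\beta)=\sum_{j=1}^n\big(\prod_{l<j}q_{l,j}^{\beta_l}x_j\epsilon_{\beta-[j]}+(-1)^{\sum_{l\le j}\beta_l}\prod_{l>j}(-q_{j,l})^{\beta_l}\epsilon_{\beta-[j]}x_j\big)$ ($\epsilon_{\beta-[j]}:=0$ if $\beta_j=0$), augmentation $\epsilon_0\mapsto1$. It carries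 the diagonal $\Delta_{\mathbb K}:\mathbb K\to\mathbb K\otimes_{\Lambda_{\mathbf q}}\mathbb K$, $\Delta_{\mathbb K}(\epsilon_\beta)=\sum_{\alpha+\gamma=\beta}\prod_{1\le k<l\le n}q_{k,l}^{\gamma_k\alpha_l}\,\epsilon_\alpha\otimes_{\Lambda_{\mathbf q}}\epsilon_\gamma$ (sum over $\alpha,\gamma\in\mathbb N^n$); this corresponds to the restriction of the bar-resolution diagonal under the identification $\epsilon_\beta\mapsto 1\otimes f_\beta\otimes1$ of $\mathbb K$ with a subcomplex of the bar resolution, so the cup product defined with $\Delta_{\mathbb K}$ induces the usual cup product on $\mathrm{HH}^*(\Lambda_{\mathbf q},\Lambda_{\mathbf q}\rtimes G)$. The cochain $(x^\alpha\otimes g)\epsilon_\beta^*\in\operatorname{Hom}_{\Lambda_{\mathbf q}^e}(\mathbb K_{|\beta|},\Lambda_{\mathbf q}\rtimes G)$ sends $\epsilon_\beta\mapsto x^\alpha\otimes g$ and all other $\epsilon_{\beta'}\mapsto0$. *)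

(* Defs.v *)
From HB Require Import structures.
From mathcomp Require Import all_boot all_order all_algebra all_fingroup.
Set Implicit Arguments. Unset Strict Implicit. Unset Printing Implicit Defensive.
Import GRing.Theory.
Local Open Scope ring_scope.

Definition mi (n : nat) := {ffun 'I_n -> nat}.
Definition mi_add n (a b : mi n) : mi n := [ffun i => (a i + b i)%N].
Definition b2mi n (a : {ffun 'I_n -> bool}) : mi n := [ffun i => nat_of_bool (a i)].

Section Defs.
Variables (k : fieldType) (A : algType k) (n : nat).

Definition mono (x : 'I_n -> A) (a : mi n) : A := \prod_(i < n) x i ^+ a i.

(* The Lambda_q data: x_i x_j = - q_ij x_j x_i, x_i^2 = 0, and the
   monomials x^alpha, alpha in {0,1}^n, form a k-basis of A.
   (This characterizes Lambda_q up to isomorphism.) *)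
Definition is_quantum_exterior (q : 'I_n -> 'I_n -> k) (x : 'I_n -> A) : Prop :=
  [/\ forall i j, x i * x j = - (q i j) *: (x j * x i),
      forall i, x i * x i = 0,
      forall a : A, exists c : {ffun {ffun 'I_n -> bool} -> k},
        a = \sum_(al : {ffun 'I_n -> bool}) c al *: mono x (b2mi al)
    & forall c : {ffun {ffun 'I_n -> bool} -> k},
        \sum_(al : {ffun 'I_n -> bool}) c al *: mono x (b2mi al) = 0 ->
        forall al, c al = 0].

Variable gT : finGroupType.

Definition is_diag_action (act : gT -> A -> A) (x : 'I_n -> A)
    (chi : gT -> 'I_n -> k) : Prop :=
  [/\ forall g, linear (act g),
      forall g a b, act g (a * b) = act g a * act g b,
      forall g, act g 1 = 1,
      (forall a, act 1%g a = a) /\ (forall g h a, act (g * h)%g a = act g (act h a))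
    & forall g i, act g (x i) = chi g i *: x i].

(* Lambda_q \rtimes G = Lambda_q (x) kG, an element being  sum_g F(g) (x) g. *)
(* (lambda (x) g)(lambda' (x) h) = lambda (g.lambda') (x) gh *)
Definition skew_mul (act : gT -> A -> A) (F F' : {ffun gT -> A}) : {ffun gT -> A} :=
  [ffun t => \sum_(g : gT) F g * act g (F' (g^-1 * t)%g)].

Definition skew_elt (x : 'I_n -> A) (a : mi n) (g : gT) : {ffun gT -> A} :=
  [ffun h => if h == g then mono x a else 0].

(* A cochain in Hom_{Lambda^e}(K, Lambda \rtimes G) is determined by its values
   on the free generators eps_beta; we represent it by beta |-> f(eps_beta). *)
Definition cochain := mi n -> {ffun gT -> A}.

Definition basic_cochain (x : 'I_n -> A) (a : mi n) (g : gT) (b : mi n) : cochain :=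
  fun b' => if b' == b then skew_elt x a g else 0.

(* coefficient of eps_alpha (x) eps_gamma in Delta_K(eps_beta) *)
Definition delta_coef (q : 'I_n -> 'I_n -> k) (a c : mi n) : k :=
  \prod_(l < n) \prod_(kk < n | (kk < l)%N) q kk l ^+ (c kk * a l).

(* cup product (f cup f')(eps_nu) = mu((f (x) f')(Delta_K eps_nu))
   = sum_{alpha + gamma = nu} coef * f(eps_alpha) f'(eps_gamma). *)
Definition cup (q : 'I_n -> 'I_n -> k) (act : gT -> A -> A) (f f' : cochain) : cochain :=
  fun nu =>
    \sum_(a : {ffun 'I_n -> 'I_(\sum_(i < n) nu i).+1} | [forall i, (a i <= nu i)%N])
      let al : mi n := [ffun i => val (a i)] in
      let ga : mi n := [ffun i => (nu i - a i)%N] in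
      delta_coef q al ga *: skew_mul act (f al) (f' ga).

End Defs.

(* Main.v *)
Require Import Defs.
From HB Require Import structures.
From mathcomp Require Import all_boot all_order all_algebra all_fingroup.
Import GRing.Theory.
Local Open Scope ring_scope.

Lemma comm_pow1 (k : fieldType) (A : algType k) (u v : A) (c : k) :
  u * v = c *: (v * u) -> forall p, u * v ^+ p = c ^+ p *: (v ^+ p * u).
Proof.
move=> H; elim=> [|p IH]; first by rewrite !expr0 mulr1 mul1r scale1r.
rewrite exprSr mulrA IH -scalerAl -[_ * u * v]mulrA H -scalerAr scalerA mulrA exprSr.
by rewrite mulrC.
Qed.

Lemma comm_pow (k : fieldType) (A : algType k) (u v : A) (c : k) :
  u * v = c *: (v * u) -> forall m p, u ^+ m * v ^+ p = c ^+ (m * p) *: (v ^+ p * u ^+ m).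
Proof.
move=> H m p; elim: m => [|m IH]; first by rewrite !expr0 mulr1 mul1r ?mul0n ?expr0 scale1r.
rewrite exprS -mulrA IH -scalerAr (mulrA u) (@comm_pow1 _ _ _ _ _ H) -scalerAl scalerA -mulrA -exprS.
by rewrite mulSn exprD mulrC.
Qed.

Lemma comm_prod (k : fieldType) (A : algType k) (I : Type) (r : seq I) (F : I -> A)
   (d : I -> k) (u : A) :
  (forall i, u * F i = d i *: (F i * u)) ->
  u * \prod_(i <- r) F i = (\prod_(i <- r) d i) *: (\prod_(i <- r) F i * u).
Proof.
move=> H; elim: r => [|i r IH]; first by rewrite !big_nil mulr1 mul1r scale1r.
rewrite !big_cons mulrA H -scalerAl -[F i * u * _]mulrA IH -scalerAr scalerA.
by rewrite !mulrA.
Qed.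

Lemma mono_mul (k : fieldType) (A : algType k) : forall n (x : 'I_n -> A)
  (c : 'I_n -> 'I_n -> k) (a b : 'I_n -> nat),
  (forall i j, x i * x j = c i j *: (x j * x i)) ->
  (\prod_(i < n) x i ^+ a i) * (\prod_(i < n) x i ^+ b i) =
  (\prod_(l < n) \prod_(j < n) (if (j < l)%N then c l j ^+ (a l * b j) else 1))
    *: \prod_(i < n) x i ^+ (a i + b i).
Proof.
elim=> [|n IH] x c a b H; first by rewrite !big_ord0 mulr1 scale1r.
rewrite !big_ord_recr /=.
set w := widen_ord (leqnSn n).
have IH' := IH (fun i => x (w i)) (fun i j => c (w i) (w j)) (fun i => a (w i))
   (fun i => b (w i)) (fun i j => H (w i) (w j)).
have D := @comm_prod _ _ _ (index_enum 'I_n) (fun j => x (w j) ^+ b (w j))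
  (fun j => c ord_max (w j) ^+ (a ord_max * b (w j))) (x ord_max ^+ a ord_max)
  (fun j => @comm_pow _ _ _ _ _ (H _ _) _ _).
rewrite mulrA -[_ * x ord_max ^+ a ord_max * _]mulrA D -scalerAr -scalerAl.
rewrite [in LHS]mulrA -[_ * x ord_max ^+ a ord_max * _]mulrA -exprD IH' -scalerAl scalerA.
congr (_ *: _).
rewrite mulrC; congr (_ * _).
  apply: eq_bigr => l _; rewrite big_ord_recr /= ltnNge (ltnW (ltn_ord l)) mulr1.
  by [].
rewrite ltnn mulr1; apply: eq_bigr => j _; by rewrite ltn_ord.
Qed.

Lemma prod_scale (k : fieldType) (A : algType k) (I : Type) (r : seq I) (c : I -> k) (F : I -> A) :
  \prod_(i <- r) (c i *: F i) = (\prod_(i <- r) c i) *: \prod_(i <- r) F i.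
Proof.
elim: r => [|i r IH]; first by rewrite !big_nil scale1r.
by rewrite !big_cons IH -scalerAl -scalerAr scalerA.
Qed.

Lemma act_mono (k : fieldType) (A : algType k) (n : nat) (gT : finGroupType)
  (x : 'I_n -> A) (act : gT -> A -> A) (chi : gT -> 'I_n -> k) g (a : mi n) :
  is_diag_action act x chi ->
  act g (mono x a) = (\prod_(i < n) chi g i ^+ a i) *: mono x a.
Proof.
case=> _ Hm H1 _ Hx.
have Hp : forall (r : seq 'I_n) (F : 'I_n -> A), act g (\prod_(i <- r) F i) = \prod_(i <- r) act g (F i).
  move=> r F; elim: r => [|i r IH]; first by rewrite !big_nil H1.
  by rewrite !big_cons Hm IH.
have Hx' : forall i m, act g (x i ^+ m) = chi g i ^+ m *: x i ^+ m.
  move=> i; elim=> [|m IH]; first by rewrite !expr0 H1 scale1r.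
  by rewrite !exprS Hm IH Hx -scalerAl -scalerAr scalerA.
rewrite /mono Hp -prod_scale; apply: eq_bigr => i _; exact: Hx'.
Qed.

Lemma lin0 (k : fieldType) (A : algType k) (f : A -> A) : linear f -> f 0 = 0.
Proof.
move=> L; have := L 1 0 0; rewrite scale1r addr0.
move/(congr1 (fun v => v - f 0)). by rewrite subrr scale1r addrK => /esym.
Qed.

Lemma skew_mul0 (k : fieldType) (A : algType k) (gT : finGroupType) (act : gT -> A -> A) F :
  skew_mul act 0 F = 0.
Proof.
apply/ffunP => t; rewrite /skew_mul !ffunE big1 // => g _.
by rewrite ffunE mul0r.
Qed.

Lemma skew_mul0r (k : fieldType) (A : algType k) (gT : finGroupType) (act : gT -> A -> A) F :
  (forall g, act g 0 = 0) -> skew_mul act F 0 = 0.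
Proof.
move=> H; apply/ffunP => t; rewrite /skew_mul !ffunE big1 // => g _.
by rewrite ffunE H mulr0.
Qed.

Lemma skew_mul_elt (k : fieldType) (A : algType k) (n : nat) (gT : finGroupType)
  (x : 'I_n -> A) (act : gT -> A -> A) a b g h :
  (forall g, act g 0 = 0) ->
  skew_mul act (skew_elt x a g) (skew_elt x b h) =
  [ffun t => if t == (g * h)%g then mono x a * act g (mono x b) else 0].
Proof.
move=> H0; apply/ffunP => t; rewrite /skew_mul !ffunE (bigD1 g) //= big1; last first.
  by move=> g' /negbTE ng; rewrite ffunE ng mul0r.
rewrite ffunE eqxx addr0 ffunE.
case: (eqVneq t (g * h)%g) => [->|ne]; first by rewrite mulKg eqxx.
case: eqP => [E|_]; last by rewrite H0 mulr0.
by case/eqP: ne; rewrite -E mulKVg.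
Qed.

Theorem theorem3p4 (k : fieldType) (A : algType k) (n : nat) (gT : finGroupType)
  (q : 'I_n -> 'I_n -> k) (x : 'I_n -> A) (act : gT -> A -> A)
  (chi : gT -> 'I_n -> k) :
  [pchar k] =i pred0 ->
  (0 < n)%N ->
  (forall i j, q i j != 0) ->
  (forall i j, q j i = (q i j)^-1) ->
  (forall i, q i i = -1) ->
  is_quantum_exterior q x ->
  is_diag_action act x chi ->
  forall (al ga : {ffun 'I_n -> bool}) (be ka : mi n) (g h : gT) (nu : mi n),
    cup q act (basic_cochain x (b2mi al) g be) (basic_cochain x (b2mi ga) h ka) nu =
    (\prod_(l < n)
       (chi g l ^+ ga l *
        \prod_(kk < n | (kk < l)%N)
          (q kk l ^ ((ka kk * be l)%:Z - (ga kk * al l)%:Z)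
           * (-1) ^ (- (ga kk * al l)%:Z))))
    *: basic_cochain x (mi_add (b2mi al) (b2mi ga)) (g * h)%g (mi_add be ka) nu.
Proof.
move=> _ _ qnz qV qd [Hc _ _ _] Hact al ga be ka g h nu.
have H0 : forall g, act g 0 = 0 by move=> g'; case: Hact => L _ _ _ _; exact: lin0 (L g').
rewrite /cup.
case: (eqVneq nu (mi_add be ka)) => Hnu.
  subst nu.
  set N := (\sum_(i < n) mi_add be ka i)%N.
  have Hle : forall i, (be i <= N)%N.
    move=> i; rewrite /N (bigD1 i) //= ffunE -addnA; exact: leq_addr.
  pose a0 : {ffun 'I_n -> 'I_N.+1} := [ffun i => inord (be i)].
  have Ea0 : [ffun i => val (a0 i)] = be.
    by apply/ffunP => i; rewrite !ffunE /= inordK // ltnS.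
  have Eka : [ffun i => (mi_add be ka i - a0 i)%N] = ka.
    by apply/ffunP => i; rewrite !ffunE /= inordK ?ltnS // addKn.
  rewrite (bigD1 a0) /=; last first.
    by apply/forallP => i; rewrite ffunE inordK ?ltnS // ffunE leq_addr.
  rewrite big1 ?addr0; last first.
    move=> a /andP [_ na]; rewrite /basic_cochain; case: eqP => E1; last by rewrite skew_mul0 scaler0.
    case/negP: na; apply/eqP/ffunP => i; apply: val_inj.
    have := congr1 (fun f : mi n => f i) E1; rewrite /= !ffunE => ->.
    by rewrite inordK // ltnS.
  rewrite Ea0 Eka /basic_cochain !eqxx skew_mul_elt // (@act_mono _ _ _ _ _ _ _ _ _ Hact).
  apply/ffunP => t; rewrite !ffunE.
  case: eqP => _; last by rewrite !scaler0.
  have E : mono x (mi_add (b2mi al) (b2mi ga)) = \prod_(i < n) x i ^+ (b2mi al i + b2mi ga i).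
    by rewrite /mono; apply: eq_bigr => i _; rewrite ffunE.
  have M : mono x (b2mi al) * mono x (b2mi ga) =
    (\prod_(l < n) \prod_(j < n) (if (j < l)%N then (- q l j) ^+ (b2mi al l * b2mi ga j) else 1))
    *: mono x (mi_add (b2mi al) (b2mi ga)).
    by rewrite E; exact: (@mono_mul _ _ n x (fun i j => - q i j) (b2mi al) (b2mi ga) Hc).
  rewrite -scalerAr M !scalerA; congr (_ *: _).
  rewrite big_split /= -?mulrA mulrCA; congr (_ * _).
    by apply: eq_bigr => i _; rewrite ffunE.
  rewrite /delta_coef -big_split /=; apply: eq_bigr => l _.
  rewrite -big_mkcond -big_split /=; apply: eq_bigr => kk _.
  rewrite !ffunE (qV kk l) (mulnC (al l)) expfzDr // -exprnP -!exprnN invr_sign.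
  rewrite -(mulN1r (q kk l)^-1) exprMn exprVn -mulrA; congr (_ * _); exact: mulrC.
rewrite {3}/basic_cochain (negbTE Hnu) scaler0 big1 // => a /forallP Ha.
rewrite /basic_cochain; case: eqP => E1; last by rewrite skew_mul0 scaler0.
case: eqP => E2; last by rewrite skew_mul0r // scaler0.
case/eqP: Hnu; apply/ffunP => i.
have := congr1 (fun f : mi n => f i) E1; have := congr1 (fun f : mi n => f i) E2.
rewrite /= !ffunE => <- <-; by rewrite subnKC.
Qed.
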